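(* Let $v\ge2$ and $M,N\in{\cal I}_v$. Write $N=N_1+N_2$ with $N_1=\beta M$, $N_2\perp M$, and $M=M_1+M_2$ with $M_1=\alpha N$, $M_2\perp N$, where $\alpha,\beta\in\mathbb R$ and orthogonality is with respect to $(x,y)=\mathrm{Re}(xy^* )$. Then $\{e^M,e^N\}=0$ if and only if either ($|N_2|=\pi/2+\pi l$, $N_1=0$ and $|M|=\pi/2+\pi k$) or ($|M_2|=\pi/2+\pi k$, $M_1=0$ and $|N|=\pi/2+\pi l$) for some integers $l,k\ge0$.
   Context: ${\cal A}_v$ is the real Cayley-Dickson algebra of dimension $2^v$, $z^*$ its conjugation, $\mathrm{Re}(z)=(z+z^* )/2$, $|z|=(zz^* )^{1/2}$, ${\cal I}_v=\{z:\mathrm{Re}(z)=0\}$. For $M\in{\cal I}_v$, $e^M=\cos|M|+\frac{\sin|M|}{|M|}M$. $\{a,b\}:=ab+ba$. *)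

(* Defs.v *)
From Stdlib Require Import Reals.
Open Scope R_scope.

(* The real Cayley-Dickson algebra A_v of dimension 2^v:
   A_0 = R, A_{v+1} = A_v x A_v with
   (a,b)(c,d) = (ac - conj(d) b, d a + b conj(c)),
   conj(a,b) = (conj a, -b). *)
Fixpoint CD (v : nat) : Type :=
  match v with O => R | S w => (CD w * CD w)%type end.

Fixpoint cd_add (v : nat) : CD v -> CD v -> CD v :=
  match v return CD v -> CD v -> CD v with
  | O => Rplus
  | S w => fun x y => (cd_add w (fst x) (fst y), cd_add w (snd x) (snd y))
  end.

Fixpoint cd_opp (v : nat) : CD v -> CD v :=
  match v return CD v -> CD v with
  | O => Ropp
  | S w => fun x => (cd_opp w (fst x), cd_opp w (snd x))
  end.

Fixpoint cd_conj (v : nat) : CD v -> CD v :=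
  match v return CD v -> CD v with
  | O => fun x => x
  | S w => fun x => (cd_conj w (fst x), cd_opp w (snd x))
  end.

Fixpoint cd_mul (v : nat) : CD v -> CD v -> CD v :=
  match v return CD v -> CD v -> CD v with
  | O => Rmult
  | S w => fun x y =>
      (cd_add w (cd_mul w (fst x) (fst y))
                (cd_opp w (cd_mul w (cd_conj w (snd y)) (snd x))),
       cd_add w (cd_mul w (snd y) (fst x))
                (cd_mul w (snd x) (cd_conj w (fst y))))
  end.

Fixpoint cd_scal (v : nat) : R -> CD v -> CD v :=
  match v return R -> CD v -> CD v with
  | O => Rmult
  | S w => fun r x => (cd_scal w r (fst x), cd_scal w r (snd x))
  end.

Fixpoint cd_real (v : nat) : R -> CD v :=
  match v return R -> CD v with
  | O => fun r => r
  | S w => fun r => (cd_real w r, cd_scal w 0 (cd_real w 0))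
  end.

Definition cd_zero (v : nat) : CD v := cd_real v 0.

(* Re(z) = (z + conj z)/2 is real; with the doubling formula for conj,
   z + conj z has only its real coordinate nonzero, so Re(z) is the real
   (first) coordinate. *)

Fixpoint cd_Re (v : nat) : CD v -> R :=
  match v return CD v -> R with
  | O => fun x => x
  | S w => fun x => cd_Re w (fst x)
  end.

Definition cd_norm (v : nat) (z : CD v) : R := sqrt (cd_Re v (cd_mul v z (cd_conj v z))).

Definition cd_inner (v : nat) (x y : CD v) : R := cd_Re v (cd_mul v x (cd_conj v y)).

Definition imag (v : nat) (z : CD v) : Prop := cd_Re v z = 0.

Definition cd_exp (v : nat) (M : CD v) : CD v :=
  cd_add v (cd_real v (cos (cd_norm v M)))
           (cd_scal v (sin (cd_norm v M) / cd_norm v M) M).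

Definition anticomm (v : nat) (a b : CD v) : CD v :=
  cd_add v (cd_mul v a b) (cd_mul v b a).

(* Main.v *)
Require Import Defs.
From Stdlib Require Import Reals Lra Lia ZArith.
Open Scope R_scope.

Fixpoint Idx (v : nat) : Type := match v with O => unit | S w => (bool * Idx w)%type end.
Fixpoint coord (v : nat) : CD v -> Idx v -> R :=
  match v return CD v -> Idx v -> R with
  | O => fun x _ => x
  | S w => fun x i => if fst i then coord w (fst x) (snd i) else coord w (snd x) (snd i)
  end.
Fixpoint idx0 (v : nat) : Idx v := match v with O => tt | S w => (true, idx0 w) end.
Definition ee v i := coord v (cd_real v 1) i.

Lemma coord_ext v : forall x y : CD v, (forall i, coord v x i = coord v y i) -> x = y.
Proof.
  induction v as [|w IH]; simpl; intros x y H.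
  - exact (H tt).
  - destruct x as [x1 x2], y as [y1 y2]; f_equal; apply IH; intro i;
    [exact (H (true, i)) | exact (H (false, i))].
Qed.

Lemma coord_add v : forall x y i, coord v (cd_add v x y) i = coord v x i + coord v y i.
Proof. induction v; simpl; intros. reflexivity. destruct i as [[|] i]; simpl; auto. Qed.
Lemma coord_opp v : forall x i, coord v (cd_opp v x) i = - coord v x i.
Proof. induction v; simpl; intros. reflexivity. destruct i as [[|] i]; simpl; auto. Qed.
Lemma coord_scal v : forall r x i, coord v (cd_scal v r x) i = r * coord v x i.
Proof. induction v; simpl; intros. reflexivity. destruct i as [[|] i]; simpl; auto. Qed.
Lemma coord_real v : forall r i, coord v (cd_real v r) i = r * ee v i.
Proof.
  unfold ee; induction v; simpl; intros. ring.
  destruct i as [[|] i]; simpl. apply IHv. rewrite !coord_scal; ring.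
Qed.
Lemma ee0 v : ee v (idx0 v) = 1.
Proof. unfold ee; induction v; simpl; auto. Qed.
Lemma coord_re v : forall x, cd_Re v x = coord v x (idx0 v).
Proof. induction v; simpl; auto. Qed.

Ltac lin := apply coord_ext; intro i; unfold cd_zero in *;
  repeat rewrite ?coord_add, ?coord_opp, ?coord_scal, ?coord_real; ring.

Lemma Re_add v x y : cd_Re v (cd_add v x y) = cd_Re v x + cd_Re v y.
Proof. rewrite !coord_re, coord_add; ring. Qed.
Lemma Re_opp v x : cd_Re v (cd_opp v x) = - cd_Re v x.
Proof. rewrite !coord_re, coord_opp; ring. Qed.
Lemma Re_scal v r x : cd_Re v (cd_scal v r x) = r * cd_Re v x.
Proof. rewrite !coord_re, coord_scal; ring. Qed.
Lemma Re_real v r : cd_Re v (cd_real v r) = r.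
Proof. rewrite !coord_re, coord_real, ee0; ring. Qed.

Lemma conj_add v : forall x y, cd_conj v (cd_add v x y) = cd_add v (cd_conj v x) (cd_conj v y).
Proof. induction v; simpl; intros. auto. destruct x, y; simpl; f_equal; rewrite ?IHv; lin. Qed.
Lemma conj_opp v : forall x, cd_conj v (cd_opp v x) = cd_opp v (cd_conj v x).
Proof. induction v; simpl; intros. auto. destruct x; simpl; f_equal; rewrite ?IHv; lin. Qed.
Lemma conj_scal v : forall r x, cd_conj v (cd_scal v r x) = cd_scal v r (cd_conj v x).
Proof. induction v; simpl; intros. auto. destruct x; simpl; f_equal; rewrite ?IHv; lin. Qed.
Lemma conj_conj v : forall x, cd_conj v (cd_conj v x) = x.
Proof. induction v; simpl; intros. auto. destruct x; simpl; f_equal; rewrite ?IHv; lin. Qed.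
Lemma conj_real v : forall r, cd_conj v (cd_real v r) = cd_real v r.
Proof. induction v; simpl; intros. auto. f_equal; rewrite ?IHv; lin. Qed.
Lemma imag_conj v : forall x, cd_Re v x = 0 -> cd_conj v x = cd_opp v x.
Proof. induction v; simpl; intros. lra. destruct x; simpl in *; f_equal; auto. Qed.

Lemma mul_add v : (forall x y z, cd_mul v (cd_add v x y) z = cd_add v (cd_mul v x z) (cd_mul v y z))
  /\ (forall x y z, cd_mul v x (cd_add v y z) = cd_add v (cd_mul v x y) (cd_mul v x z)).
Proof.
  induction v as [|w [IHl IHr]]; simpl; split; intros. ring. ring.
  - destruct x, y, z; simpl; f_equal; rewrite ?IHl, ?IHr; lin.
  - destruct x, y, z; simpl; f_equal; rewrite ?conj_add, ?IHl, ?IHr; lin.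
Qed.
Definition mul_addl v := proj1 (mul_add v).
Definition mul_addr v := proj2 (mul_add v).

Lemma mul_scal v : (forall r x y, cd_mul v (cd_scal v r x) y = cd_scal v r (cd_mul v x y))
  /\ (forall r x y, cd_mul v x (cd_scal v r y) = cd_scal v r (cd_mul v x y)).
Proof.
  induction v as [|w [IHl IHr]]; simpl; split; intros. ring. ring.
  - destruct x, y; simpl; f_equal; rewrite ?IHl, ?IHr; lin.
  - destruct x, y; simpl; f_equal; rewrite ?conj_scal, ?IHl, ?IHr; lin.
Qed.
Definition mul_scall v := proj1 (mul_scal v).
Definition mul_scalr v := proj2 (mul_scal v).

Lemma mul_oppl v x y : cd_mul v (cd_opp v x) y = cd_opp v (cd_mul v x y).
Proof.
  replace (cd_opp v x) with (cd_scal v (-1) x) by lin. rewrite mul_scall; lin.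
Qed.
Lemma mul_oppr v x y : cd_mul v x (cd_opp v y) = cd_opp v (cd_mul v x y).
Proof.
  replace (cd_opp v y) with (cd_scal v (-1) y) by lin. rewrite mul_scalr; lin.
Qed.

Lemma mul_real v : (forall r x, cd_mul v (cd_real v r) x = cd_scal v r x)
  /\ (forall r x, cd_mul v x (cd_real v r) = cd_scal v r x).
Proof.
  induction v as [|w [IHl IHr]]; simpl; split; intros. ring. ring.
  - destruct x; simpl; f_equal; rewrite ?IHl, ?IHr, ?mul_scall, ?mul_scalr; lin.
  - destruct x; simpl; f_equal; rewrite ?conj_scal, ?conj_real, ?IHl, ?IHr, ?mul_scall, ?mul_scalr; lin.
Qed.
Definition mul_reall v := proj1 (mul_real v).
Definition mul_realr v := proj2 (mul_real v).
Fixpoint dot (v : nat) : CD v -> CD v -> R :=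
  match v return CD v -> CD v -> R with
  | O => Rmult
  | S w => fun x y => dot w (fst x) (fst y) + dot w (snd x) (snd y)
  end.

Lemma dot_sym v : forall x y, dot v x y = dot v y x.
Proof. induction v; simpl; intros. ring. rewrite (IHv (fst x)), (IHv (snd x)); reflexivity. Qed.
Lemma dot_addl v : forall x y z, dot v (cd_add v x y) z = dot v x z + dot v y z.
Proof. induction v; simpl; intros. ring. rewrite !IHv; ring. Qed.
Lemma dot_scall v : forall r x z, dot v (cd_scal v r x) z = r * dot v x z.
Proof. induction v; simpl; intros. ring. rewrite !IHv; ring. Qed.
Lemma dot_nonneg v : forall x, 0 <= dot v x x.
Proof. induction v; intros x. simpl; nra. destruct x as [a b]; simpl. pose proof (IHv a); pose proof (IHv b). lra. Qed.
Lemma dot_coord0 v : forall x y, (forall i, coord v x i = 0) -> dot v x y = 0.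
Proof.
  induction v; simpl; intros x y H. rewrite (H tt); ring.
  rewrite (IHv (fst x)), (IHv (snd x)). ring.
  intro i; exact (H (false, i)). intro i; exact (H (true, i)).
Qed.

Lemma QR v : (forall x y, cd_Re v (cd_mul v x (cd_conj v y)) = dot v x y)
  /\ (forall x y, cd_Re v (cd_mul v (cd_conj v x) y) = dot v x y).
Proof.
  induction v as [|w [IHQ IHR]]; simpl; split; intros. ring. ring.
  - destruct x as [a b], y as [c d]; simpl.
    rewrite Re_add, Re_opp, conj_opp, mul_oppl, Re_opp, IHQ, IHR, (dot_sym w d b); ring.
  - destruct x as [a b], y as [c d]; simpl.
    rewrite Re_add, !Re_opp, mul_oppr, !Re_opp, !IHR, (dot_sym w d b); ring.
Qed.
Definition Qlem v := proj1 (QR v).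

Lemma polar v : forall x y, cd_add v (cd_mul v x (cd_conj v y)) (cd_mul v y (cd_conj v x))
  = cd_real v (2 * cd_Re v (cd_mul v x (cd_conj v y))).
Proof.
  induction v as [|w IH]; simpl; intros. ring.
  destruct x as [a b], y as [c d]; simpl.
  rewrite !conj_opp, !conj_conj, !mul_oppl, Re_add, !Re_opp.
  pose proof (IH a c) as H1. pose proof (IH (cd_conj w d) (cd_conj w b)) as H2.
  rewrite !conj_conj in H2.
  f_equal.
  - apply coord_ext; intro i.
    apply (f_equal (fun z => coord w z i)) in H1. apply (f_equal (fun z => coord w z i)) in H2.
    rewrite ?coord_add, ?coord_opp, ?coord_scal, ?coord_real in H1. rewrite ?coord_add, ?coord_opp, ?coord_scal, ?coord_real in H2. rewrite ?coord_add, ?coord_opp, ?coord_scal, ?coord_real. lra.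
  - lin.
Qed.

Lemma K1 v M N : cd_Re v M = 0 -> cd_Re v N = 0 ->
  cd_add v (cd_mul v M N) (cd_mul v N M) = cd_real v (-2 * dot v M N).
Proof.
  intros hM hN. pose proof (polar v M N) as H.
  rewrite Qlem, (imag_conj v M hM), (imag_conj v N hN), !mul_oppr in H.
  apply coord_ext; intro i. apply (f_equal (fun z => coord v z i)) in H.
  rewrite ?coord_add, ?coord_opp, ?coord_scal, ?coord_real in H. rewrite ?coord_add, ?coord_opp, ?coord_scal, ?coord_real. lra.
Qed.
Lemma sdiv0 x : x = 0 -> sin x / x = 0.
Proof. intros ->; rewrite sin_0; unfold Rdiv; ring. Qed.

Lemma sdiv_nz x : sin x <> 0 -> x <> 0 -> sin x / x <> 0.
Proof. intros h1 h2. unfold Rdiv. apply Rmult_integral_contrapositive; split; auto. now apply Rinv_neq_0_compat. Qed.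

Lemma sdiv_zero_sin x : sin x / x = 0 -> sin x = 0.
Proof.
  intros h. destruct (Req_dec x 0) as [->|hx]. apply sin_0.
  destruct (Req_dec (sin x) 0); auto. exfalso; now apply (sdiv_nz x).
Qed.

Lemma scalar_core (a b c : R) : 0 <= a -> 0 <= b ->
  cos a * cos b = (sin a / a) * (sin b / b) * c ->
  (cos a * (sin b / b)) * c + (cos b * (sin a / a)) * (a * a) = 0 ->
  (cos a * (sin b / b)) * (b * b) + (cos b * (sin a / a)) * c = 0 ->
  cos a = 0 /\ cos b = 0 /\ c = 0.
Proof.
  intros ha hb E1 E2 E3.
  set (p := cos a) in *. set (q := cos b) in *. set (s := sin a / a) in *. set (t := sin b / b) in *.
  pose proof (sin2_cos2 a) as Sa. pose proof (sin2_cos2 b) as Sb. unfold Rsqr in *. fold p q in Sa, Sb.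
  assert (C1 : s * (t*t*c*c + q*q*(a*a)) = 0).
  { replace (s * (t*t*c*c + q*q*(a*a))) with (q*((p*t)*c + (q*s)*(a*a)) - t*c*(p*q - s*t*c)) by ring.
    rewrite E1. replace ((p*t)*c + (q*s)*(a*a)) with 0 by lra. ring. }
  assert (C2 : t * (p*p*(b*b) + s*s*c*c) = 0).
  { replace (t * (p*p*(b*b) + s*s*c*c)) with (p*((p*t)*(b*b) + (q*s)*c) - s*c*(p*q - s*t*c)) by ring.
    rewrite E1. replace ((p*t)*(b*b) + (q*s)*c) with 0 by lra. ring. }
  destruct (Req_dec s 0) as [hs|hs].
  - exfalso. assert (sa : sin a = 0) by (apply sdiv_zero_sin; exact hs).
    rewrite sa in Sa. rewrite hs in E1.
    assert (hq : q = 0) by nra. rewrite hq in Sb.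
    assert (sb : sin b <> 0) by nra.
    assert (b <> 0) by (intro hb0; apply sb; rewrite hb0; apply sin_0).
    assert (ht : t <> 0) by (apply sdiv_nz; auto).
    assert (p*p*(b*b) + s*s*c*c = 0) by (destruct (Rmult_integral _ _ C2); [contradiction|auto]).
    rewrite hs in H0. nra.
  - assert (a <> 0) by (intro h0; apply hs; apply sdiv0; auto).
    assert (h1 : t*t*c*c + q*q*(a*a) = 0) by (destruct (Rmult_integral _ _ C1); [contradiction|auto]).
    pose proof (Rle_0_sqr (t*c)) as T1. pose proof (Rle_0_sqr (q*a)) as T2. unfold Rsqr in T1, T2.
    assert (hq2 : (q*a)*(q*a) = 0) by lra.
    assert (hq : q = 0).
    { destruct (Rmult_integral _ _ hq2) as [h|h]; destruct (Rmult_integral _ _ h); auto; contradiction. }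
    assert (hc2 : (t*c)*(t*c) = 0) by lra.
    rewrite hq in Sb.
    assert (sb : sin b <> 0) by nra.
    assert (b <> 0) by (intro hb0; apply sb; rewrite hb0; apply sin_0).
    assert (ht : t <> 0) by (apply sdiv_nz; auto).
    assert (hc : c = 0).
    { destruct (Rmult_integral _ _ hc2) as [h|h]; destruct (Rmult_integral _ _ h); auto; contradiction. }
    assert (h2 : p*p*(b*b) + s*s*c*c = 0) by (destruct (Rmult_integral _ _ C2); [contradiction|auto]).
    rewrite hc in h2.
    assert (hp2 : (p*b)*(p*b) = 0) by lra.
    assert (hp : p = 0).
    { destruct (Rmult_integral _ _ hp2) as [h|h]; destruct (Rmult_integral _ _ h); auto; contradiction. }
    auto.
Qed.

Lemma cos0_nat x : 0 <= x -> cos x = 0 -> exists k : nat, x = PI / 2 + PI * INR k.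
Proof.
  intros hx h. destruct (cos_eq_0_0 x h) as [k hk].
  assert (0 <= k)%Z.
  { destruct (Z_lt_le_dec k 0) as [hl|]; auto. exfalso.
    assert (IZR k <= -1). { apply IZR_le. lia. }
    pose proof PI_RGT_0. nra. }
  exists (Z.to_nat k). rewrite INR_IZR_INZ, Z2Nat.id by auto. lra.
Qed.

Lemma cos_nat k : cos (PI / 2 + PI * INR k) = 0.
Proof. apply cos_eq_0_1. exists (Z.of_nat k). rewrite <- INR_IZR_INZ. ring. Qed.
Lemma expand v M N p q s t : cd_Re v M = 0 -> cd_Re v N = 0 ->
  anticomm v (cd_add v (cd_real v p) (cd_scal v s M)) (cd_add v (cd_real v q) (cd_scal v t N))
  = cd_add v (cd_real v (2*p*q - 2*s*t*dot v M N))
      (cd_add v (cd_scal v (2*p*t) N) (cd_scal v (2*q*s) M)).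
Proof.
  intros hM hN. pose proof (K1 v M N hM hN) as H. unfold anticomm.
  rewrite !mul_addl, !mul_addr, !mul_reall, !mul_realr, !mul_scall, !mul_scalr.
  apply coord_ext; intro i. apply (f_equal (fun z => coord v z i)) in H.
  rewrite ?coord_add, ?coord_opp, ?coord_scal, ?coord_real in H.
  rewrite ?coord_add, ?coord_opp, ?coord_scal, ?coord_real.
  nra.
Qed.

Lemma norm_dot v z : cd_norm v z = sqrt (dot v z z).
Proof. unfold cd_norm. now rewrite Qlem. Qed.

Theorem corollary13 (v : nat) (Hv : (2 <= v)%nat) (M N : CD v)
  (HM : imag v M) (HN : imag v N)
  (alpha beta : R) (N1 N2 M1 M2 : CD v)
  (HNdec : N = cd_add v N1 N2) (HN1 : N1 = cd_scal v beta M)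
  (HN2 : cd_inner v N2 M = 0)
  (HMdec : M = cd_add v M1 M2) (HM1 : M1 = cd_scal v alpha N)
  (HM2 : cd_inner v M2 N = 0) :
  anticomm v (cd_exp v M) (cd_exp v N) = cd_zero v <->
  exists l k : nat,
    (cd_norm v N2 = PI / 2 + PI * INR l /\ N1 = cd_zero v /\
     cd_norm v M = PI / 2 + PI * INR k)
    \/
    (cd_norm v M2 = PI / 2 + PI * INR k /\ M1 = cd_zero v /\
     cd_norm v N = PI / 2 + PI * INR l).
Proof.
  unfold imag, cd_inner in *. rewrite Qlem in HN2, HM2.
  unfold cd_exp. rewrite (expand v M N _ _ _ _ HM HN).
  pose proof (norm_dot v M) as na. pose proof (norm_dot v N) as nb.
  pose proof (dot_nonneg v M) as mm0. pose proof (dot_nonneg v N) as nn0.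
  assert (ha : 0 <= cd_norm v M) by (rewrite na; apply sqrt_pos).
  assert (hb : 0 <= cd_norm v N) by (rewrite nb; apply sqrt_pos).
  assert (aa : cd_norm v M * cd_norm v M = dot v M M) by (rewrite na; apply sqrt_sqrt; auto).
  assert (bb : cd_norm v N * cd_norm v N = dot v N N) by (rewrite nb; apply sqrt_sqrt; auto).
  set (a := cd_norm v M) in *. set (b := cd_norm v N) in *.
  split.
  - intro H.
    set (p := cos a) in *. set (q := cos b) in *. set (s := sin a / a) in *. set (t := sin b / b) in *.
    assert (E1 : 2*p*q - 2*s*t*dot v M N = 0).
    { apply (f_equal (fun z => coord v z (idx0 v))) in H.
      rewrite <- !coord_re in H. rewrite !Re_add, !Re_scal, !Re_real, HM, HN in H.
      unfold cd_zero in H. rewrite Re_real in H. lra. }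
    assert (W : forall i, coord v (cd_add v (cd_scal v (2*p*t) N) (cd_scal v (2*q*s) M)) i = 0).
    { intro i. apply (f_equal (fun z => coord v z i)) in H. unfold cd_zero in H.
      rewrite coord_add, coord_real, E1, coord_real in H. lra. }
    pose proof (dot_coord0 v _ M W) as WM. pose proof (dot_coord0 v _ N W) as WN.
    rewrite dot_addl, !dot_scall in WM, WN.
    rewrite (dot_sym v N M) in WM.
    destruct (scalar_core a b (dot v M N) ha hb) as [hp [hq hc]].
    + fold p q s t. lra.
    + fold p q s t. rewrite aa. lra.
    + fold p q s t. rewrite bb. lra.
    + destruct (cos0_nat a ha hp) as [k hk]. destruct (cos0_nat b hb hq) as [l hl].
      exists l, k. left.
      assert (a <> 0) by (intro h0; rewrite h0, cos_0 in hp; lra).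
      assert (dot v M M <> 0) by (intro h0; rewrite h0 in aa; nra).
      assert (hdN : dot v N M = beta * dot v M M).
      { rewrite HNdec at 1. rewrite HN1, dot_addl, dot_scall, HN2. ring. }
      rewrite dot_sym, hc in hdN.
      assert (hbeta : beta = 0) by nra.
      assert (hN1 : N1 = cd_zero v) by (rewrite HN1, hbeta; lin).
      assert (hNN : N2 = N) by (rewrite HNdec, hN1; lin).
      split; [|split]; auto. rewrite hNN. exact hl.
  - intros [l [k [[h1 [h2 h3]] | [h1 [h2 h3]]]]].
    + assert (hNN : N2 = N) by (rewrite HNdec, h2; lin).
      rewrite hNN in h1, HN2. fold b in h1.
      rewrite h1, h3, !cos_nat, dot_sym, HN2. lin.
    + assert (hMM : M2 = M) by (rewrite HMdec, h2; lin).
      rewrite hMM in h1, HM2. fold a in h1.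
      rewrite h1, h3, !cos_nat, HM2. lin.
Qed.
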